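(* Let $(\phi,y)$ be feasible and satisfy the modified condition (MC). Let $(\phi^\dagger,y^\dagger)$ be feasible such that either $\phi^\dagger\ge\phi$ coordinatewise or $\phi^\dagger\le\phi$ coordinatewise. Then $T(\phi,y)\le T(\phi^\dagger,y^\dagger)$, where $T(\phi,y)=\sum_{(i,j)\in\mathcal E}D_{ij}(F_{ij})+\sum_{i}B_i(Y_i)$.
   Context: Network model. $\mathcal G=(\mathcal V,\mathcal E)$ is a finite directed graph with $(j,i)\in\mathcal E$ whenever $(i,j)\in\mathcal E$; $\mathcal N(i)=\{j:(i,j)\in\mathcal E\}$. $\mathcal C$ is a finite catalog; item $k$ has nonempty designated server set $\mathcal S_k\subseteq\mathcal V$. Exogenous request rates $r_i(k)\ge0$. Variables: $\phi_{ij}(k)\in[0,1]$ with $\phi_{ij}(k)=0$ if $(i,j)\notin\mathcal E$, and $y_i(k)\in[0,1]$. Flow conservation: $y_i(k)+\sum_{j}\phi_{ij}(k)=1$ if $i\notin\mathcal S_k$ and $=0$ if $i\in\mathcal S_k$. A pair $(\phi,y)$ is feasible if it satisfies these constraints and the arrival rates $t_i(k)$, solving $t_i(k)=r_i(k)+\sum_j t_j(k)\phi_{ji}(k)$, are uniquely determined and nonnegative (e.g. when for each $k$ the graph with edges $\{(i,j):\phi_{ij}(k)>0\}$ is acyclic). $f_{ji}(k)=t_i(k)\phi_{ij}(k)$, $F_{ij}=\sum_k f_{ij}(k)$, $Y_i=\sum_k y_i(k)$. $D_{ij},B_i$ are continuously differentiable, increasing, convex, zero at $0$. Marginal cost: $\frac{\partial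 T}{\partial r_i(k)}=\sum_{j\in\mathcal N(i)}\phi_{ij}(k)\big(D'_{ji}(F_{ji})+\frac{\partial T}{\partial r_j(k)}\big)$, zero if $i\in\mathcal S_k$ or $y_i(k)=1$. Modified condition (MC): with $\delta_i(k)=\min\{B_i'(Y_i)/t_i(k),\ \min_{j\in\mathcal N(i)}(D'_{ji}(F_{ji})+\frac{\partial T}{\partial r_j(k)})\}$ (where $B_i'(Y_i)/t_i(k):=\infty$ if $t_i(k)=0$), for all $i,k$: $B_i'(Y_i)=t_i(k)\delta_i(k)$ if $y_i(k)>0$, $B_i'(Y_i)\ge t_i(k)\delta_i(k)$ if $y_i(k)=0$; and for all $j\in\mathcal N(i)$, $D'_{ji}(F_{ji})+\frac{\partial T}{\partial r_j(k)}=\delta_i(k)$ if $\phi_{ij}(k)>0$, $\ge\delta_i(k)$ if $\phi_{ij}(k)=0$. *)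

(* Defs.v *)
From HB Require Import structures.
From mathcomp Require Import all_boot all_order all_algebra.
From mathcomp Require Import all_classical all_reals all_analysis.
Set Implicit Arguments. Unset Strict Implicit. Unset Printing Implicit Defensive.
Import Order.TTheory GRing.Theory Num.Theory.
Import numFieldNormedType.Exports.
Local Open Scope classical_set_scope.
Local Open Scope ring_scope.

Section CacheNetwork.
Variables (R : realType) (V C : finType).

Definition cost_fun (f : R -> R) : Prop :=
  [/\ (forall x, 0 <= x -> derivable f x 1),
      {within [set x : R | 0 <= x], continuous (derive1 f)},
      (forall a b, 0 <= a -> a <= b -> f a <= f b),
      (forall a b s, 0 <= a -> 0 <= b -> 0 <= s <= 1 ->
         f (s * a + (1 - s) * b) <= s * f a + (1 - s) * f b)
    & f 0 = 0].

Definition arrival_eq (r : V -> C -> R) (phi : V -> V -> C -> R) (k : C)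
    (t : V -> R) : Prop :=
  forall i, t i = r i k + \sum_(j : V) t j * phi j i k.

Definition feasible (E : rel V) (S : C -> {set V}) (r : V -> C -> R)
    (phi : V -> V -> C -> R) (y : V -> C -> R) : Prop :=
  [/\ (forall i j k, 0 <= phi i j k <= 1),
      (forall i j k, ~~ E i j -> phi i j k = 0),
      (forall i k, 0 <= y i k <= 1),
      (forall i k, y i k + \sum_(j : V) phi i j k = if i \in S k then 0 else 1)
    & (forall k,
        [/\ exists t, arrival_eq r phi k t,
            (forall t t', arrival_eq r phi k t -> arrival_eq r phi k t' -> t = t')
          & (forall t, arrival_eq r phi k t -> forall i, 0 <= t i)])].

(* F_ab = sum_k f_ab(k), where f_ji(k) = t_i(k) phi_ij(k). *)
Definition Flow (phi : V -> V -> C -> R) (t : V -> C -> R) (a b : V) : R :=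
  \sum_(k : C) t b k * phi b a k.

Definition Ycache (y : V -> C -> R) (i : V) : R := \sum_(k : C) y i k.

Definition Tcost (E : rel V) (D : V -> V -> R -> R) (B : V -> R -> R)
    (phi : V -> V -> C -> R) (y : V -> C -> R) (t : V -> C -> R) : R :=
  \sum_(i : V) \sum_(j : V | E i j) D i j (Flow phi t i j)
  + \sum_(i : V) B i (Ycache y i).

(* m i k plays the role of dT/dr_i(k). *)
Definition marginal_eq (E : rel V) (S : C -> {set V}) (D : V -> V -> R -> R)
    (phi : V -> V -> C -> R) (y : V -> C -> R) (t : V -> C -> R)
    (m : V -> C -> R) : Prop :=
  forall i k, m i k =
    if (i \in S k) || (y i k == 1) then 0
    else \sum_(j : V | E i j) phi i j k * (derive1 (D j i) (Flow phi t j i) + m j k).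

(* delta_i(k), valued in the extended reals (min over an empty set is +oo,
   and B_i'(Y_i)/t_i(k) := +oo when t_i(k) = 0). *)
Definition delta (E : rel V) (D : V -> V -> R -> R) (B : V -> R -> R)
    (phi : V -> V -> C -> R) (y : V -> C -> R) (t : V -> C -> R)
    (m : V -> C -> R) (i : V) (k : C) : \bar R :=
  Order.min
    (if t i k == 0 then +oo%E else (derive1 (B i) (Ycache y i) / t i k)%:E)
    (\big[Order.min/+oo%E]_(j : V | E i j)
        (derive1 (D j i) (Flow phi t j i) + m j k)%:E).

Definition MC (E : rel V) (D : V -> V -> R -> R) (B : V -> R -> R)
    (phi : V -> V -> C -> R) (y : V -> C -> R) (t : V -> C -> R)
    (m : V -> C -> R) : Prop :=
  forall i k,
    let d := delta E D B phi y t m i k in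
    (if 0 < y i k then (derive1 (B i) (Ycache y i))%:E = ((t i k)%:E * d)%E
     else ((t i k)%:E * d <= (derive1 (B i) (Ycache y i))%:E)%E)
    /\ (forall j, E i j ->
          if 0 < phi i j k then (derive1 (D j i) (Flow phi t j i) + m j k)%:E = d
          else (d <= (derive1 (D j i) (Flow phi t j i) + m j k)%:E)%E).

End CacheNetwork.

(* Main.v *)
Require Import Defs.
From HB Require Import structures.
From mathcomp Require Import all_boot all_order all_algebra.
From mathcomp Require Import all_classical all_reals all_analysis.
From mathcomp Require Import ring lra.
Import Order.TTheory GRing.Theory Num.Theory.
Import numFieldNormedType.Exports.
Local Open Scope ring_scope.

Section An.
Variable R : realType.
Implicit Types f : R -> R.

Lemma eqle (x y : R) : x = y -> x <= y. Proof. by move->. Qed.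

Lemma der_right_le f a K e : 0 < e -> derivable f a 1 ->
  (forall h, 0 < h -> h < e -> h^-1 * (f (h + a) - f a) <= K) ->
  derive1 f a <= K.
Proof.
move=> e0 df H.
rewrite derive1E ['D_1 f a]cvg_at_rightE; last exact: df.
apply: limr_le.
  rewrite -(cvg_at_rightE (fun h : R => h^-1 *: ((f \o shift a) (h *: 1) - f a))) //.
  apply: cvg_trans df; apply: cvg_app.
  move=> A [e' e'gt0 Ae']; exists e' => // x xe xgt0; apply: Ae' => //.
  exact/lt0r_neq0.
near=> h.
have h0 : 0 < h by near: h; exists 1 => /=.
have he : h < e.
  near: h; exists e => //= x; rewrite /= distrC subr0 => /(le_lt_trans (ler_norm _)) //.
rewrite /= scaler1; exact: H.
Unshelve. all: by end_near. Qed.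

Lemma der_left_ge f a K e : 0 < e -> derivable f a 1 ->
  (forall h, - e < h -> h < 0 -> K <= h^-1 * (f (h + a) - f a)) ->
  K <= derive1 f a.
Proof.
move=> e0 df H.
rewrite derive1E ['D_1 f a]cvg_at_leftE; last exact: df.
apply: limr_ge.
  rewrite -(cvg_at_leftE (fun h : R => h^-1 *: ((f \o shift a) (h *: 1) - f a))) //.
  apply: cvg_trans df; apply: cvg_app.
  move=> A [e' e'gt0 Ae']; exists e' => // x xe xgt0; apply: Ae' => //.
  exact/ltr0_neq0.
near=> h.
have h0 : h < 0 by near: h; exists 1 => /=.
have he : - e < h.
  near: h; exists e => //= x; rewrite /= distrC subr0.
  by move=> /ltr_normlP [] ; rewrite ltrNl.
rewrite /= scaler1; exact: H.
Unshelve. all: by end_near. Qed.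

Lemma der_right_ge f a K e : 0 < e -> derivable f a 1 ->
  (forall h, 0 < h -> h < e -> K <= h^-1 * (f (h + a) - f a)) ->
  K <= derive1 f a.
Proof.
move=> e0 df H.
rewrite derive1E ['D_1 f a]cvg_at_rightE; last exact: df.
apply: limr_ge.
  rewrite -(cvg_at_rightE (fun h : R => h^-1 *: ((f \o shift a) (h *: 1) - f a))) //.
  apply: cvg_trans df; apply: cvg_app.
  move=> A [e' e'gt0 Ae']; exists e' => // x xe xgt0; apply: Ae' => //.
  exact/lt0r_neq0.
near=> h.
have h0 : 0 < h by near: h; exists 1 => /=.
have he : h < e.
  near: h; exists e => //= x; rewrite /= distrC subr0 => /(le_lt_trans (ler_norm _)) //.
rewrite /= scaler1; exact: H.
Unshelve. all: by end_near. Qed.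

Lemma cost_deriv_ge0 f a : cost_fun f -> 0 <= a -> 0 <= derive1 f a.
Proof.
case=> df _ mon _ _ a0.
apply: (@der_right_ge f a 0 1) => //; first exact: df.
move=> h h0 _; apply: mulr_ge0; first by rewrite invr_ge0 ltW.
rewrite subr_ge0; apply: mon => //; rewrite lerDr ltW //.
Qed.

Lemma cost_tangent f a b : cost_fun f -> 0 <= a -> 0 <= b ->
  f a + derive1 f a * (b - a) <= f b.
Proof.
case=> df _ _ cvx _ a0 b0.
have [ab|ab|->] := ltgtP a b; last by rewrite subrr mulr0 addr0.
- have ba0 : 0 < b - a by rewrite subr_gt0.
  have key : forall h, 0 < h -> h < b - a ->
     h^-1 * (f (h + a) - f a) <= (f b - f a) / (b - a).
    move=> h h0 hlt.
    set s := h / (b - a).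
    have s0 : 0 <= s by rewrite /s divr_ge0 // ltW.
    have s1 : s <= 1 by rewrite /s ler_pdivrMr // mul1r ltW.
    have -> : h + a = s * b + (1 - s) * a.
      rewrite /s; field; by rewrite lt0r_neq0.
    have := cvx b a s b0 a0; rewrite s0 s1 => /(_ isT) H.
    have E1 : f (s * b + (1 - s) * a) - f a <= s * (f b - f a).
      by rewrite lerBlDr; apply: le_trans H _; apply: eqle; ring.
    rewrite -(ler_pM2l (x := h)) // mulrA mulfV ?lt0r_neq0 // mul1r.
    apply: le_trans E1 _; apply: eqle; rewrite /s; field; by rewrite lt0r_neq0.
  have := (@der_right_le f a ((f b - f a) / (b - a)) (b - a) ba0 (df a a0) key).
  rewrite ler_pdivlMr // => H; rewrite -lerBrDl; exact: H.
- have ba0 : 0 < a - b by rewrite subr_gt0.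
  have key : forall h, - (a - b) < h -> h < 0 ->
     (f b - f a) / (b - a) <= h^-1 * (f (h + a) - f a).
    move=> h hlt h0.
    set s := h / (b - a).
    have bmab : b - a < 0 by rewrite subr_lt0.
    have s0 : 0 <= s by rewrite /s mulr_le0 ?ltW // invr_lt0.
    have s1 : s <= 1.
      rewrite /s ler_ndivrMr // mul1r ltW //; by rewrite opprB in hlt.
    have -> : h + a = s * b + (1 - s) * a.
      rewrite /s; field; by rewrite ltr0_neq0.
    have := cvx b a s b0 a0; rewrite s0 s1 => /(_ isT) H.
    have E1 : f (s * b + (1 - s) * a) - f a <= s * (f b - f a).
      by rewrite lerBlDr; apply: le_trans H _; apply: eqle; ring.
    rewrite -(ler_nM2l (x := h)) // mulrA mulfV ?ltr0_neq0 // mul1r.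
    apply: le_trans E1 _; apply: eqle; rewrite /s; field; by rewrite ltr0_neq0.
  have := (@der_left_ge f a ((f b - f a) / (b - a)) (a - b) ba0 (df a a0) key).
  have bmab : b - a < 0 by rewrite subr_lt0.
  rewrite ler_ndivrMr // => H; rewrite -lerBrDl; exact: H.
Qed.
End An.

Section Kl.
Variables (R : realType) (V C : finType).

Lemma sumV (F : V -> R) : \sum_(i : V) F i = \sum_(a < #|V|) F (enum_val a).
Proof. by rewrite (reindex (enum_val : 'I_#|V| -> V)) //; apply: onW_bij; exact: enum_val_bij. Qed.

Lemma no_closed_class (r : V -> C -> R) (p : V -> V -> C -> R) k
   (t0 : V -> R) (M : {set V}) :
  arrival_eq r p k t0 ->
  (forall t t', arrival_eq r p k t -> arrival_eq r p k t' -> t = t') ->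
  (exists j0, j0 \in M) ->
  (forall j, j \in M -> \sum_(i in M) p j i k = 1) ->
  (forall j i, j \in M -> i \notin M -> p j i k = 0) -> False.
Proof.
move=> ht0 uniq MN0 sum1 leak.
pose n := #|V|.
pose P : 'M[R]_n := \matrix_(a, b) (if enum_val a \in M then p (enum_val a) (enum_val b) k else 0).
pose A : 'M[R]_n := 1%:M - P.
pose w : 'cV[R]_n := \col_b ((enum_val b \in M)%:R).
have Aw : A *m w = 0.
  apply/matrixP => a z; rewrite !mxE.
  under eq_bigr do rewrite !mxE.
  under eq_bigr => i _ do rewrite -(inj_eq enum_val_inj).
  rewrite -(sumV (fun v => ((enum_val a == v)%:R - (if enum_val a \in M then p (enum_val a) v k else 0)) * (v \in M)%:R)).
  set x := enum_val a.
  under eq_bigr do rewrite mulrBl.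
  rewrite sumrB (bigD1 x) //= big1 => [|v vx]; last by rewrite eq_sym (negbTE vx) mul0r.
  rewrite eqxx mul1r addr0.
  case xM: (x \in M).
    transitivity (1 - \sum_(i in M) p x i k); last by rewrite sum1 // subrr.
    congr (_ - _); rewrite [in RHS]big_mkcond /=.
    by apply: eq_bigr => i _; case: (i \in M); rewrite ?mulr1 ?mulr0.
  rewrite big1 ?subr0 // => v _; by rewrite mul0r.
have detA : \det A == 0.
  rewrite -det_tr; apply/det0P; exists w^T.
    case: MN0 => j0 j0M.
    apply/negP => /eqP /matrixP /(_ 0 (enum_rank j0)); rewrite !mxE enum_rankK j0M /=.
    by move=> /eqP; rewrite oner_eq0.
  by rewrite -trmx_mul Aw trmx0.
case/det0P: detA => u u0 uA.
pose x : V -> R := fun i => u 0 (enum_rank i).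
have hx : forall i, x i = \sum_j x j * (if j \in M then p j i k else 0).
  move=> i; move/matrixP: uA => /(_ 0 (enum_rank i)); rewrite !mxE.
  under eq_bigr do rewrite !mxE.
  rewrite (sumV (fun j => x j * (if j \in M then p j i k else 0))).
  rewrite enum_rankK; under eq_bigr do rewrite mulrBr.
  rewrite sumrB (bigD1 (enum_rank i)) //= eqxx mulr1 big1 => [|a ai]; last by rewrite (negbTE ai) mulr0.
  rewrite addr0 => /eqP; rewrite subr_eq0 => /eqP; rewrite /x => ->.
  by apply: eq_bigr => a _; rewrite /x enum_valK.
have x0 : forall i, i \notin M -> x i = 0.
  move=> i iM; rewrite hx big1 // => j _; case: ifP => jM; last by rewrite mulr0.
  by rewrite leak // mulr0.
have hom : forall i, x i = \sum_j x j * p j i k.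
  move=> i; rewrite hx; apply: eq_bigr => j _; case: ifP => // /negbT jM.
  by rewrite x0 // !mul0r.
have : (fun i => t0 i + x i) = t0.
  apply: uniq => // i; rewrite ht0 hom -addrA; congr (_ + _).
  by rewrite -big_split /=; apply: eq_bigr => j _; rewrite mulrDl.
move=> eq0.
apply/negP: u0; apply/negPn/eqP/matrixP => a b; rewrite (ord1 a) mxE.
have := congr1 (fun f => f (enum_val b)) eq0; rewrite /= /x enum_valK.
by move=> /eqP; rewrite -subr_eq0 addrAC subrr add0r => /eqP.
Qed.

End Kl.

Section Pos.
Variables (R : realType) (V C : finType) (E : rel V) (S : C -> {set V}) (r : V -> C -> R)
  (p : V -> V -> C -> R) (yv : V -> C -> R).
Hypothesis F : feasible E S r p yv.

Lemma exists_min (f : V -> R) (i1 : V) : exists i0, forall j, f i0 <= f j.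
Proof. case: (@arg_minP _ R V i1 xpredT f isT) => i0 _ H; exists i0 => j; exact: H. Qed.

Lemma p_ge0 i j k : 0 <= p i j k.
Proof. by case: F => H _ _ _ _; case/andP: (H i j k). Qed.

Lemma rowsum_le1 j k : \sum_i p j i k <= 1.
Proof.
case: F => _ _ Hy Hs _; have := Hs j k; case/andP: (Hy j k) => y0 _.
move=> e; have : \sum_i p j i k <= if j \in S k then 0 else 1.
  by rewrite -e lerDr.
by case: ifP => // _ /le_trans; apply; rewrite ler01.
Qed.

Lemma psum_zero (I : finType) (P : pred I) (f : I -> R) :
  (forall i, P i -> 0 <= f i) -> \sum_(i | P i) f i <= 0 -> forall i, P i -> f i = 0.
Proof.
move=> H s0; apply: psumr_eq0P => //; apply/le_anti; rewrite s0 sumr_ge0 //.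
Qed.

Lemma pos_sol k (d g : V -> R) : (forall i, 0 <= g i) ->
  (forall i, d i = \sum_j d j * p j i k + g i) -> forall i, 0 <= d i.
Proof.
move=> g0 hd.
case: F => _ _ _ _ /(_ k) [[t0 ht0] uniq _].
apply/forallP; apply/negPn/negP => /forallPn [i1]; rewrite -ltNge => di1.
pose N := [set i | d i < 0].
pose s j := \sum_(i in N) p j i k.
have s0 j : 0 <= s j by apply: sumr_ge0 => i _; exact: p_ge0.
have s1 j : s j <= 1.
  apply: le_trans (rowsum_le1 j k); rewrite [leRHS](bigID (fun i => i \in N)) /= lerDl.
  by apply: sumr_ge0 => i _; exact: p_ge0.
have key : \sum_(j in N) d j * s j <= \sum_(j in N) d j.
  apply: (@le_trans _ _ (\sum_j d j * s j)).
    rewrite [leRHS](bigID (fun j => j \in N)) /= lerDl.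
    apply: sumr_ge0 => j; rewrite inE -leNgt => dj.
    exact: mulr_ge0.
  apply: (@le_trans _ _ (\sum_(i in N) \sum_j d j * p j i k)).
    rewrite exchange_big /=; apply: ler_sum => j _; rewrite /s mulr_sumr.
    by [].
  by apply: ler_sum => i _; rewrite [leRHS]hd lerDl.
have sN : forall j, j \in N -> s j = 1.
  have H : forall j, j \in N -> d j * s j - d j = 0.
    apply: psum_zero.
    - move=> l; rewrite inE => dl; rewrite -{2}(mulr1 (d l)) -mulrBr.
      by apply: mulr_le0; [exact: ltW | rewrite subr_le0].
    - by rewrite sumrB subr_le0.
  move=> j jN; have dj : d j < 0 by move: jN; rewrite inE.
  move: (H j jN); rewrite -{2}(mulr1 (d j)) -mulrBr => /eqP.
  by rewrite mulf_eq0 (negbTE (ltr0_neq0 dj)) /= subr_eq0 => /eqP.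
apply: (@no_closed_class R V C r p k t0 N ht0 uniq).
- by exists i1; rewrite inE.
- exact: sN.
- move=> j i jN iN.
  have H : \sum_(l | l \notin N) p j l k <= 0.
    have := rowsum_le1 j k; rewrite (bigID (fun l => l \in N)) /=.
    by rewrite -/(s j) sN // -lerBrDl subrr.
  exact: (@psum_zero V (fun l => l \notin N) (fun l => p j l k) (fun l _ => p_ge0 j l k) H i iN).
Qed.
Lemma pos_marg k (mm : V -> R) (h : V -> V -> R) :
  (forall i j, 0 <= p i j k * h i j) ->
  (forall i, mm i = \sum_j p i j k * (h i j + mm j)) -> forall i, 0 <= mm i.
Proof.
move=> h0 hm.
case: F => _ _ _ _ /(_ k) [[t0 ht0] uniq _].
apply/forallP; apply/negPn/negP => /forallPn [i1]; rewrite -ltNge => mi1.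
have [i0 Hi0] := exists_min mm i1.
set mu := mm i0.
have mu0 : mu < 0 by apply: le_lt_trans (Hi0 i1) mi1.
pose M := [set i | mm i == mu].
have step j : j \in M ->
    (\sum_l p j l k * (mm l - mu)) + mu * (\sum_l p j l k - 1) <= 0.
  rewrite inE => /eqP jM.
  have -> : (\sum_l p j l k * (mm l - mu)) + mu * (\sum_l p j l k - 1)
          = \sum_l p j l k * mm l - mu.
    under eq_bigr do rewrite mulrBr.
    rewrite sumrB -mulr_suml; ring.
  rewrite subr_le0 -jM [leRHS]hm; apply: ler_sum => l _.
  by rewrite mulrDr lerDr.
have t1 j : j \in M -> 0 <= \sum_l p j l k * (mm l - mu).
  move=> _; apply: sumr_ge0 => l _; apply: mulr_ge0; first exact: p_ge0.
  by rewrite subr_ge0.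
have t2 j : 0 <= mu * (\sum_l p j l k - 1).
  by apply: mulr_le0; [exact: ltW | rewrite subr_le0 rowsum_le1].
have leak j l : j \in M -> l \notin M -> p j l k = 0.
  move=> jM lM.
  have H : \sum_l p j l k * (mm l - mu) <= 0.
    by apply: le_trans (step j jM); rewrite lerDl.
  have := @psum_zero V xpredT (fun l => p j l k * (mm l - mu)) _ H l isT.
  move=> /(_ _) /eqP; rewrite mulf_eq0 subr_eq0.
  move: lM; rewrite inE => /negbTE -> ; rewrite orbF => /(_ _)/eqP; apply.
  by move=> l' _; apply: mulr_ge0; [exact: p_ge0 | rewrite subr_ge0].
have sM j : j \in M -> \sum_(l in M) p j l k = 1.
  move=> jM.
  have e : mu * (\sum_l p j l k - 1) = 0.
    apply/le_anti; rewrite t2 andbT; apply: le_trans (step j jM).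
    by rewrite lerDr t1.
  move/eqP: e; rewrite mulf_eq0 (negbTE (ltr0_neq0 mu0)) /= subr_eq0 => /eqP <-.
  rewrite [RHS](bigID (fun l => l \in M)) /= [X in _ = _ + X]big1 ?addr0 //.
  by move=> l lM; exact: leak.
apply: (@no_closed_class R V C r p k t0 M ht0 uniq).
- by exists i0; rewrite inE.
- exact: sM.
- exact: leak.
Qed.
End Pos.


Lemma t_mono (R : realType) (V C : finType) (E : rel V) (S : C -> {set V}) (r : V -> C -> R)
  (pa pb : V -> V -> C -> R) (yb : V -> C -> R) (ta tb : V -> R) k :
  feasible E S r pb yb -> arrival_eq r pa k ta -> arrival_eq r pb k tb ->
  (forall i j, pa i j k <= pb i j k) -> (forall i, 0 <= ta i) -> forall i, ta i <= tb i.
Proof.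
move=> Fb ha hb le ta0 i; rewrite -subr_ge0.
apply: (@pos_sol R V C E S r pb yb Fb k (fun i => tb i - ta i)
          (fun i => \sum_j ta j * (pb j i k - pa j i k))).
  by move=> l; apply: sumr_ge0 => j _; apply: mulr_ge0 => //; rewrite subr_ge0.
move=> l; rewrite (hb l) (ha l) -big_split /= opprD addrACA subrr add0r -sumrB.
by apply: eq_bigr => j _; ring.
Qed.

Lemma dual_id (R : realType) (V C : finType) (r : V -> C -> R)
  (p : V -> V -> C -> R) k (tt mm : V -> R) : arrival_eq r p k tt ->
  \sum_i tt i * (mm i - \sum_j p i j k * mm j) = \sum_i r i k * mm i.
Proof.
move=> ha.
have e1 : \sum_i tt i * (\sum_j p i j k * mm j) = \sum_j (tt j - r j k) * mm j.
  under eq_bigr do rewrite mulr_sumr.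
  rewrite exchange_big /=; apply: eq_bigr => j _.
  have -> : tt j - r j k = \sum_i tt i * p i j k by rewrite {1}ha addrAC subrr add0r.
  by rewrite mulr_suml; apply: eq_bigr => i _; rewrite mulrA.
under eq_bigr do rewrite mulrBr.
rewrite sumrB e1 -sumrB; apply: eq_bigr => i _; ring.
Qed.

Theorem corollary3 (R : realType) (V C : finType) (E : rel V)
    (S : C -> {set V}) (r : V -> C -> R)
    (D : V -> V -> R -> R) (B : V -> R -> R)
    (phi : V -> V -> C -> R) (y : V -> C -> R) (t m : V -> C -> R)
    (phid : V -> V -> C -> R) (yd : V -> C -> R) (td : V -> C -> R) :
  symmetric E ->
  (forall k, exists s, s \in S k) ->
  (forall i k, 0 <= r i k) ->
  (forall i j, E i j -> cost_fun (D i j)) ->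
  (forall i, cost_fun (B i)) ->
  feasible E S r phi y ->
  (forall k, arrival_eq r phi k (fun i => t i k)) ->
  marginal_eq E S D phi y t m ->
  MC E D B phi y t m ->
  feasible E S r phid yd ->
  (forall k, arrival_eq r phid k (fun i => td i k)) ->
  ((forall i j k, phi i j k <= phid i j k) \/
   (forall i j k, phid i j k <= phi i j k)) ->
  Tcost E D B phi y t <= Tcost E D B phid yd td.
Proof.
move=> Esym _ r0 Dc Bc F1 at1 hm hmc F2 at2 mono.
have F1' := F1; have F2' := F2.
case: F1' => p1b p1E y1b fc1 u1.
case: F2' => p2b p2E y2b fc2 u2.
have p1 i j k : 0 <= phi i j k by case/andP: (p1b i j k).
have p2 i j k : 0 <= phid i j k by case/andP: (p2b i j k).
have y1 i k : 0 <= y i k by case/andP: (y1b i k).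
have y2 i k : 0 <= yd i k by case/andP: (y2b i k).
have t1 i k : 0 <= t i k by case: (u1 k) => _ _ /(_ _ (at1 k)).
have t2 i k : 0 <= td i k by case: (u2 k) => _ _ /(_ _ (at2 k)).
pose c i j := derive1 (D j i) (Flow phi t j i).
pose b i := derive1 (B i) (Ycache y i).
have Fl0 i j : 0 <= Flow phi t i j.
  by apply: sumr_ge0 => k _; apply: mulr_ge0.
have Fl0' i j : 0 <= Flow phid td i j.
  by apply: sumr_ge0 => k _; apply: mulr_ge0.
have Y0 i : 0 <= Ycache y i by apply: sumr_ge0.
have Y0' i : 0 <= Ycache yd i by apply: sumr_ge0.
have b0 i : 0 <= b i by apply: (@cost_deriv_ge0 R).
have c0 i j : E i j -> 0 <= c i j.
  by move=> eij; apply: (@cost_deriv_ge0 R) => //; apply: Dc; rewrite Esym.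
have pc0 i j k : 0 <= phi i j k * c i j.
  case eij: (E i j); first by apply: mulr_ge0 => //; exact: c0.
  by rewrite p1E ?eij // mul0r.
have mfull i k : m i k = \sum_j phi i j k * (c i j + m j k).
  rewrite hm; case: ifP => H.
    have rs : \sum_j phi i j k <= 0.
      have e := fc1 i k; have -> : \sum_j phi i j k = (if i \in S k then 0 else 1) - y i k.
        by rewrite -e addrAC subrr add0r.
      case/orP: H => [iS|/eqP ->]; first by rewrite iS sub0r oppr_le0.
      by case: ifP; rewrite ?sub0r ?subrr // oppr_le0 ler01.
    have z j : phi i j k = 0.
      exact: (@psum_zero R V xpredT (fun j => phi i j k) (fun j _ => p1 i j k) rs j isT).
    by rewrite big1 // => j _; rewrite z mul0r.
  rewrite big_mkcond /=; apply: eq_bigr => j _; case: ifP => //.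
  by move/negbT => nE; rewrite p1E // mul0r.
have m0 i k : 0 <= m i k.
  exact: (@pos_marg R V C E S r phi y F1 k (fun i => m i k) c (fun i j => pc0 i j k) (fun i => mfull i k) i).
have mono2 : ((forall i j k, phi i j k <= phid i j k) /\ (forall i k, t i k <= td i k)) \/
              ((forall i j k, phid i j k <= phi i j k) /\ (forall i k, td i k <= t i k)).
  case: mono => H; [left|right]; split => // i k.
    exact: (@t_mono R V C E S r phi phid yd (fun i => t i k) (fun i => td i k) k F2 (at1 k) (at2 k) (fun i j => H i j k) (fun i => t1 i k) i).
  exact: (@t_mono R V C E S r phid phi y (fun i => td i k) (fun i => t i k) k F1 (at2 k) (at1 k) (fun i j => H i j k) (fun i => t2 i k) i).
clear mono.
pose term i k := td i k * (\sum_j phid i j k * (c i j + m j k) - m i k)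
                 + b i * (yd i k - y i k).
have termge0 : forall i k, 0 <= term i k.
  move=> i k; rewrite /term.
  have pdc0 j : 0 <= phid i j k * (c i j + m j k).
    case eij: (E i j); first by apply: mulr_ge0 => //; apply: addr_ge0 => //; exact: c0.
    by rewrite p2E ?eij // mul0r.
  have Sd0 : 0 <= \sum_j phid i j k * (c i j + m j k) by apply: sumr_ge0.
  have e1 := fc1 i k; have e2 := fc2 i k.
  have [mc1 mc2] := hmc i k.
  case iS: (i \in S k) in e1 e2.
    have my : m i k = 0 by rewrite hm iS.
    have y0 : y i k = 0.
      apply/le_anti; rewrite y1 andbT -e1 lerDl; apply: sumr_ge0 => j _; exact: p1.
    have yd0 : yd i k = 0.
      apply/le_anti; rewrite y2 andbT -e2 lerDl; apply: sumr_ge0 => j _; exact: p2.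
    by rewrite my y0 yd0 subr0 subrr mulr0 addr0; apply: mulr_ge0.
  have sp : \sum_j phi i j k = 1 - y i k by rewrite -e1 addrAC subrr add0r.
  have spd : \sum_j phid i j k = 1 - yd i k by rewrite -e2 addrAC subrr add0r.
  have yd1 : yd i k <= 1 by case/andP: (y2b i k).
  have lbs : forall x, (forall j, E i j -> x <= c i j + m j k) ->
      x * (1 - yd i k) <= \sum_j phid i j k * (c i j + m j k).
    move=> x Hx; rewrite -spd mulr_sumr; apply: ler_sum => j _.
    case eij: (E i j); last by rewrite p2E ?eij // !mulr0 mul0r.
    by rewrite mulrC; apply: ler_wpM2l => //; exact: Hx.
  have dle : forall j, E i j -> (delta E D B phi y t m i k <= (c i j + m j k)%:E)%E.
    move=> j eij; have := mc2 j eij; case: ifP => _; last by [].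
    by move=> ->.
  have lbS : \sum_j phi i j k <= \sum_j phid i j k -> yd i k <= y i k.
    by rewrite sp spd lerD2l lerN2.
  have lbS' : \sum_j phid i j k <= \sum_j phi i j k -> y i k <= yd i k.
    by rewrite sp spd lerD2l lerN2.
  have t0' := t1 i k; have td0 := t2 i k; have bb0 := b0 i.
  have yy0 := y1 i k; have yyd0 := y2 i k.
  case y1e: (y i k == 1).
    move/eqP: y1e => y1e.
    have my : m i k = 0 by rewrite hm y1e eqxx orbT.
    rewrite my subr0.
    case: mono2 => [[Hp Ht]|[Hp Ht]]; last first.
      have : y i k <= yd i k by apply: lbS'; apply: ler_sum => j _; exact: Hp.
      rewrite y1e => hy; apply: addr_ge0; apply: mulr_ge0 => //; by rewrite subr_ge0.
    have [x [x0 bx Hx]] : exists x, [/\ 0 <= x, b i = t i k * x &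
                         forall j, E i j -> x <= c i j + m j k].
      have mc := mc1; rewrite y1e ltr01 in mc.
      have [tz|tp] := eqVneq (t i k) 0.
        exists 0; split => //.
          by move: mc; rewrite tz mul0e mulr0 => -[].
        move=> j eij; apply: addr_ge0; [exact: c0 | exact: m0].
      have tp' : 0 < t i k by rewrite lt0r tp t1.
      move: mc dle; case: (delta E D B phi y t m i k) => [x||] mc dle.
      - move: mc; rewrite -EFinM => -[bx]; exists x; split.
        + by have := b0 i; rewrite /b bx pmulr_rge0.
        + exact: bx.
        + by move=> j eij; rewrite -lee_fin; exact: dle.
      - by rewrite gt0_muley ?lte_fin // in mc.
      - by rewrite gt0_muleNy ?lte_fin // in mc.
    have h1 := lbs x Hx.
    have h2 := Ht i k.
    rewrite bx; nra.
  have [j0 pj0] : exists j0, 0 < phi i j0 k.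
    case: (pselect (exists j0, 0 < phi i j0 k)) => // H.
    have : \sum_j phi i j k <= 0.
      apply: sumr_le0 => j _; rewrite leNgt; apply/negP => h; apply: H; by exists j.
    rewrite sp subr_le0 => h; case/andP: (y1b i k) => _ h'.
    have yone : y i k = 1 by apply/le_anti; rewrite h h'.
    by move: y1e; rewrite yone eqxx.
  have ej0 : E i j0 by apply/negPn/negP => nE; move: pj0; rewrite p1E // ltxx.
  set d := c i j0 + m j0 k.
  have hd : delta E D B phi y t m i k = d%:E.
    by have := mc2 j0 ej0; rewrite pj0 => <-.
  have d0 : 0 <= d by apply: addr_ge0; [exact: c0 | exact: m0].
  have Hx : forall j, E i j -> d <= c i j + m j k.
    by move=> j eij; rewrite -lee_fin -hd; exact: dle.
  have mi : m i k = d * (1 - y i k).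
    rewrite mfull -sp mulr_sumr; apply: eq_bigr => j _.
    have [pj|pj] := ltP 0 (phi i j k).
      have eij : E i j by apply/negPn/negP => nE; move: pj; rewrite p1E // ltxx.
      have := mc2 j eij; rewrite pj hd => -[->]; by rewrite mulrC.
    have -> : phi i j k = 0 by apply/le_anti; rewrite pj p1.
    by rewrite !mulr0 mul0r.
  rewrite hd in mc1.
  have lb := lbs d Hx.
  rewrite mi.
  case: ifP mc1 => ypos mc.
    move: mc; rewrite -EFinM => -[bx]; rewrite /b bx.
    case: mono2 => [[Hp Ht]|[Hp Ht]].
      have hy : yd i k <= y i k by apply: lbS; apply: ler_sum => j _; exact: Hp.
      have h2 := Ht i k.
      have h3 : 0 <= d * ((y i k - yd i k) * (td i k - t i k)).
        by apply: mulr_ge0 => //; apply: mulr_ge0; rewrite subr_ge0.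
      have h4 := ler_wpM2l td0 lb.
      nra.
    have hy : y i k <= yd i k by apply: lbS'; apply: ler_sum => j _; exact: Hp.
    have h2 := Ht i k.
    have h3 : 0 <= d * ((yd i k - y i k) * (t i k - td i k)).
      by apply: mulr_ge0 => //; apply: mulr_ge0; rewrite subr_ge0.
    have h4 := ler_wpM2l td0 lb.
    nra.
  move: mc; rewrite -EFinM lee_fin => bx; rewrite -/(b i) in bx.
  have yz : y i k = 0 by apply/le_anti; rewrite yy0 andbT leNgt ypos.
  rewrite yz.
  case: mono2 => [[Hp Ht]|[Hp Ht]].
    have hy : yd i k <= y i k by apply: lbS; apply: ler_sum => j _; exact: Hp.
    rewrite yz in hy; have yd0 : yd i k = 0 by apply/le_anti; rewrite hy yyd0.
    rewrite yd0 in lb *; have h4 := ler_wpM2l td0 lb; nra.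
  have h2 := Ht i k; have h4 := ler_wpM2l td0 lb.
  have h5 : 0 <= yd i k * (b i - t i k * d) by apply: mulr_ge0; rewrite // subr_ge0.
  have h6 : 0 <= yd i k * (d * (t i k - td i k)).
    by apply: mulr_ge0 => //; apply: mulr_ge0; rewrite // subr_ge0.
  nra.
have E3 k : \sum_i \sum_j c i j * (td i k * phid i j k - t i k * phi i j k)
            + \sum_i b i * (yd i k - y i k) = \sum_i term i k.
  rewrite /term big_split /=; congr (_ + _).
  transitivity (\sum_i td i k * (\sum_j phid i j k * c i j)
                - \sum_i t i k * (\sum_j phi i j k * c i j)).
    rewrite -sumrB; apply: eq_bigr => i _; rewrite !mulr_sumr -sumrB.
    by apply: eq_bigr => j _; ring.
  have K1 : \sum_i t i k * (\sum_j phi i j k * c i j)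
          = \sum_i td i k * (m i k - \sum_j phid i j k * m j k).
    rewrite (@dual_id R V C r phid k _ (fun i => m i k) (at2 k)) -(@dual_id R V C r phi k _ (fun i => m i k) (at1 k)); apply: eq_bigr => i _.
    congr (_ * _); rewrite (mfull i k).
    rewrite [X in _ = X - _](eq_bigr (fun j => phi i j k * c i j + phi i j k * m j k)).
      by rewrite big_split /= addrK.
    by move=> j _; rewrite mulrDr.
  rewrite K1 -sumrB; apply: eq_bigr => i _.
  rewrite [X in _ = _ * (X - _)](eq_bigr (fun j => phid i j k * c i j + phid i j k * m j k)).
    by rewrite big_split /=; ring.
  by move=> j _; rewrite mulrDr.
have lin : \sum_a \sum_(b' | E a b') c b' a * (Flow phid td a b' - Flow phi t a b')
           + \sum_i b i * (Ycache yd i - Ycache y i) = \sum_k \sum_i term i k.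
  rewrite -(eq_bigr _ (fun k _ => E3 k)) big_split /=; congr (_ + _).
    rewrite (eq_bigr (fun a => \sum_b' c b' a * (Flow phid td a b' - Flow phi t a b'))); last first.
      move=> a _; rewrite big_mkcond; apply: eq_bigr => b' _; case: ifP => // /negbT nE.
      rewrite /Flow !big1 ?subrr ?mulr0 // => k _.
        by rewrite p1E ?mulr0 // Esym.
      by rewrite p2E ?mulr0 // Esym.
    rewrite exchange_big /=; apply: esym.
    rewrite exchange_big /=; apply: eq_bigr => i _; rewrite exchange_big /=.
    apply: eq_bigr => j _; rewrite /Flow -sumrB mulr_sumr.
    by apply: eq_bigr.
  rewrite exchange_big /=; apply: eq_bigr => i _.
  by rewrite /Ycache -sumrB mulr_sumr.
have conv : Tcost E D B phi y t +
    (\sum_a \sum_(b' | E a b') c b' a * (Flow phid td a b' - Flow phi t a b')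
           + \sum_i b i * (Ycache yd i - Ycache y i)) <= Tcost E D B phid yd td.
  rewrite /Tcost addrACA; apply: lerD.
    rewrite -big_split; apply: ler_sum => a _; rewrite -big_split; apply: ler_sum => b' eab /=.
    exact: (@cost_tangent R _ _ _ (Dc a b' eab) (Fl0 a b') (Fl0' a b')).
  rewrite -big_split; apply: ler_sum => i _.
  exact: (@cost_tangent R _ _ _ (Bc i) (Y0 i) (Y0' i)).
apply: le_trans conv; rewrite lin lerDl; apply: sumr_ge0 => k _.
by apply: sumr_ge0 => i _; exact: termge0.
Qed.
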